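(* Let $a=(a_1,\dots,a_d)\in\mathcal{UN}_d$ and let $A_a=(a_{ij})$ be a real symmetric matrix associated to $a$. Then there exists $\beta\in\mathbb{R}$ such that $a_{ij}^2=\beta^2$ for all $i\neq j$.
   Context: A polynomial in $\mathbb{R}[z]$ is hyperbolic if all its roots are real. A sequence $a\in\mathbb{R}^d$ is a Nuij sequence if for every hyperbolic $p\in\mathbb{R}[z]$ of degree $d$, $p_a(z,s):=p(z)+\sum_{k=1}^d a_k s^k p^{(k)}(z)$ is hyperbolic for all $s\in\mathbb{R}$. A Nuij sequence $a$ admits a universal determinantal representation if there exists a real symmetric $d\times d$ matrix $A_a$ such that for every monic hyperbolic polynomial $p(z)=(z+\lambda_1)\cdots(z+\lambda_d)$ of degree $d$ one has $p_a(z,s)=\det(zI+D+sA_a)$, where $D$ is the diagonal matrix with diagonal entries $\lambda_1,\dots,\lambda_d$ in an arbitrary order; such $A_a$ is called a matrix associated to $a$. $\mathcal{UN}_d$ is the set of Nuij sequences in $\mathbb{R}^d$ admitting a universal determinantal representation. *)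

(* Defs.v *)
From HB Require Import structures.
From mathcomp Require Import all_boot all_order all_algebra.
From mathcomp Require Import reals.
Set Implicit Arguments. Unset Strict Implicit. Unset Printing Implicit Defensive.
Import Order.TTheory GRing.Theory Num.Theory.
Local Open Scope ring_scope.

Section Nuij.
Variable R : realType.

Definition hyperbolic (p : {poly R}) : Prop :=
  exists (c : R) (rs : seq R), p = c *: \prod_(r <- rs) ('X - r%:P).

(* a : 'I_d -> R, where a k stands for a_{k+1};
   pa a p s = p(z) + sum_{k=1}^d a_k s^k p^(k)(z), as a polynomial in z *)
Definition pa (d : nat) (a : 'I_d -> R) (p : {poly R}) (s : R) : {poly R} :=
  p + \sum_(k < d) (a k * s ^+ k.+1) *: p^`(k.+1).

Definition nuij (d : nat) (a : 'I_d -> R) : Prop :=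
  forall p : {poly R}, size p = d.+1 -> hyperbolic p ->
    forall s : R, hyperbolic (pa a p s).

(* A is a (real symmetric) matrix associated to a: for every monic hyperbolic
   p = (z + l_1)...(z + l_d), with the l_i in any order,
   p_a(z,s) = det(zI + D + sA) for all real z, s. *)
Definition associated_matrix (d : nat) (a : 'I_d -> R) (A : 'M[R]_d) : Prop :=
  A^T = A /\
  forall (l : 'I_d -> R) (z s : R),
    (pa a (\prod_(i < d) ('X + (l i)%:P)) s).[z] =
      \det (z%:M + diag_mx (\row_i l i) + s *: A).

Definition UN (d : nat) (a : 'I_d -> R) : Prop :=
  nuij a /\ exists A : 'M[R]_d, associated_matrix a A.

End Nuij.

(* Main.v *)
Require Import Defs.
From HB Require Import structures.
From mathcomp Require Import all_boot all_order all_algebra.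
From mathcomp Require Import reals.
From mathcomp Require Import fingroup perm.
Import Order.TTheory GRing.Theory Num.Theory.
Local Open Scope ring_scope.

Section Aux.
Variables (R : realType) (d : nat) (A : 'M[R]_d).

Definition Mp (e : 'I_d -> R) : 'M[{poly R}]_d :=
  \matrix_(k, l) ((e k *+ (k == l))%:P + 'X * (A k l)%:P).

Lemma detMp e s : (\det (Mp e)).[s] = \det (diag_mx (\row_i e i) + s *: A).
Proof.
rewrite -horner_evalE -det_map_mx; congr (\det _); apply/matrixP => k l.
by rewrite !mxE /= horner_evalE hornerD hornerM hornerX !hornerC mulrC.
Qed.

Lemma term_low e (S : pred 'I_d) (σ : 'S_d) m :
  (forall k, S k -> e k = 0) ->
  (m < #|[pred k | S k || (σ k != k)]|)%N -> (\prod_k Mp e k (σ k))`_m = 0.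
Proof.
move=> He Hm.
rewrite (bigID [pred k | S k || (σ k != k)]) /=.
rewrite (eq_bigr (fun k => 'X * (A k (σ k))%:P)); last first.
  move=> k /orP[Sk|nk]; rewrite mxE.
    by rewrite He // mul0rn add0r.
  by rewrite eq_sym (negbTE nk) mulr0n add0r.
by rewrite big_split /= prodr_const -mulrA mulrC coefMXn Hm.
Qed.

Lemma det_coef e m : (\det (Mp e))`_m =
  \sum_(σ : 'S_d) (-1) ^+ σ * (\prod_k Mp e k (σ k))`_m.
Proof.
rewrite /determinant coef_sum; apply: eq_bigr => σ _.
by case: (odd_perm σ); rewrite /= ?expr1 ?expr0 ?mulN1r ?mul1r ?coefN.
Qed.

Lemma moved_ex (σ : 'S_d) : σ != 1%g -> exists k, σ k != k.
Proof.
move=> H; case: (pickP (fun k => σ k != k)) => [k Hk|H0]; first by exists k.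
case/eqP: H; apply/permP => x; rewrite perm1; exact/eqP/negbFE/H0.
Qed.

Lemma card_moved1 (i : 'I_d) (σ : 'S_d) : σ != 1%g ->
  (1 < #|[pred k | (k == i) || (σ k != k)]|)%N.
Proof.
move=> /moved_ex [k Hk]; apply/card_gt1P; exists k, (σ k); split.
- by rewrite inE Hk orbT.
- by rewrite inE (inj_eq perm_inj) Hk orbT.
- by rewrite eq_sym.
Qed.

Lemma card_moved2 (i j : 'I_d) (σ : 'S_d) : i != j -> σ != 1%g ->
  σ != tperm i j ->
  (2 < #|[pred k | ((k == i) || (k == j)) || (σ k != k)]|)%N.
Proof.
move=> ij H1 Ht.
case: (pickP (fun k => (σ k != k) && (k != i) && (k != j))) => [k /andP[/andP[Hk ki] kj]|H0].
  apply/card_gt2P; exists i, j, k; split.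
    by split; rewrite inE /= ?eqxx ?orbT ?Hk ?orbT.
  by split; rewrite // eq_sym.
have fix1 : forall x, x != i -> x != j -> σ x = x.
  by move=> x xi xj; move: (H0 x); rewrite xi xj !andbT => /negbFE/eqP.
have img : forall y, (y == i) || (y == j) -> (σ y == i) || (σ y == j).
  move=> y yij; apply/negPn/negP; rewrite negb_or => /andP[yi yj].
  have Ey := fix1 _ yi yj; move/perm_inj: Ey => Ey.
  by move: yi yj; rewrite Ey; case/orP: yij => /eqP->; rewrite eqxx.
have ji : j != i by rewrite eq_sym.
case/orP: (img i (introT orP (or_introl (eqxx i)))) => /eqP si.
  have sj : σ j = j.
    case/orP: (img j (introT orP (or_intror (eqxx j)))) => /eqP // sj.
    by move: ji; rewrite -(inj_eq (@perm_inj _ σ)) sj si eqxx.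
  case/eqP: H1; apply/permP => x; rewrite perm1.
  have [->//|xi] := eqVneq x i; have [->//|xj] := eqVneq x j.
  exact: fix1.
have sj : σ j = i.
  case/orP: (img j (introT orP (or_intror (eqxx j)))) => /eqP // sj.
  by move: ji; rewrite -(inj_eq (@perm_inj _ σ)) sj si eqxx.
case/eqP: Ht; apply/permP => x.
have [->|xi] := eqVneq x i; first by rewrite tpermL.
have [->|xj] := eqVneq x j; first by rewrite tpermR.
by rewrite tpermD 1?eq_sym // fix1.
Qed.

Lemma Mp_diag e k : e k = 0 -> Mp e k k = 'X * (A k k)%:P.
Proof. by move=> ek; rewrite mxE ek mul0rn add0r. Qed.

Lemma Mp_off e k l : k != l -> Mp e k l = 'X * (A k l)%:P.
Proof. by move=> kl; rewrite mxE (negbTE kl) mulr0n add0r. Qed.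

Lemma Mp_at0 e k : (Mp e k k).[0] = e k.
Proof. by rewrite mxE eqxx mulr1n hornerD hornerM hornerX !hornerC mul0r addr0. Qed.

Lemma coef1 e i : (forall k, e k = (k != i)%:R) -> (\det (Mp e))`_1 = A i i.
Proof.
move=> He; rewrite det_coef (bigD1 1%g) //= [X in _ + X]big1 ?addr0; last first.
  move=> σ Hσ; rewrite (@term_low e (pred1 i)) ?mulr0 //.
    by move=> k /eqP->; rewrite He eqxx.
  exact: card_moved1.
rewrite odd_perm1 expr0 mul1r (bigD1 i) //= perm1 Mp_diag ?He ?eqxx //.
rewrite -mulrA coefXM /= coefCM -horner_coef0 horner_prod big1 ?mulr1 //.
by move=> k ki; rewrite perm1 Mp_at0 He ki.
Qed.

Lemma coef2 e i j : i != j -> (forall k, e k = ((k != i) && (k != j))%:R) ->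
  (\det (Mp e))`_2 = A i i * A j j - A i j * A j i.
Proof.
move=> ij He; rewrite det_coef (bigD1 1%g) //= (bigD1 (tperm i j)) /=; last first.
  apply/eqP => /permP /(_ i); rewrite perm1 tpermL => /eqP; rewrite eq_sym (negbTE ij). done.
rewrite [X in _ + (_ + X)]big1 ?addr0; last first.
  move=> σ /andP[Ht H1]; rewrite (@term_low e [pred k | (k == i) || (k == j)]) ?mulr0 //.
    by move=> k /orP[] /eqP->; rewrite He eqxx ?andbF.
  exact: card_moved2.
rewrite odd_perm1 odd_tperm ij expr0 expr1 mul1r mulN1r.
have q1 : (\prod_(k | (k != i) && (k != j)) Mp e k k).[0] = 1.
  rewrite horner_prod big1 // => k /andP[ki kj]; by rewrite Mp_at0 He ki kj.
rewrite (bigD1 i) //= (bigD1 j) //=; last by rewrite eq_sym.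
rewrite [\prod_(k < d) Mp e k (tperm i j k)](bigD1 i) //= [\prod_(k | k != i) Mp e k (tperm i j k)](bigD1 j) //=; last by rewrite eq_sym.
rewrite !perm1 [\prod_(k | _) Mp e k (tperm i j k)](eq_bigr (fun k => Mp e k k)); last by move=> k /andP[ki kj]; rewrite tpermD // eq_sym.
rewrite tpermL tpermR !Mp_diag ?He ?eqxx ?andbF // !Mp_off // 1?eq_sym //.
rewrite -!mulrA !coefXM /= !coefCM !coefXM /= !coefCM -!horner_coef0 q1 !mulr1.
rewrite (eq_bigr (fun k => Mp e k k)); last by move=> k _; rewrite perm1.
by rewrite q1 mulr1.
Qed.
End Aux.
Arguments Mp {R d}.

Lemma poly_eq_ev (R : realType) (p q : {poly R}) :
  (forall x, p.[x] = q.[x]) -> p = q.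
Proof.
move=> H; apply/eqP; rewrite -subr_eq0; apply/eqP.
apply: (@roots_geq_poly_eq0 _ _ [seq i%:R | i <- iota 0 (size (p - q))]).
- by apply/allP => x _; rewrite /root hornerD hornerN H subrr.
- by rewrite map_inj_uniq ?iota_uniq // => m n /eqP; rewrite eqr_nat => /eqP.
- by rewrite size_map size_iota.
Qed.

Definition Qpoly (R : realType) d (a : 'I_d -> R) (p : {poly R}) : {poly R} :=
  p.[0]%:P + \sum_(k < d) (a k * (p^`(k.+1)).[0]) *: 'X^(k.+1).
Arguments Qpoly {R d}.

Lemma Qpoly_eval (R : realType) d (a : 'I_d -> R) p s :
  (Qpoly a p).[s] = (pa a p s).[0].
Proof.
rewrite /Qpoly /pa !hornerD hornerC !horner_sum; congr (_ + _).
apply: eq_bigr => k _; rewrite !hornerZ hornerXn; exact: mulrAC.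
Qed.

Lemma prod_form (R : realType) d (P : pred 'I_d) n : #|[predC P]| = n ->
  \prod_(k < d) ('X + ((P k)%:R : R)%:P) = 'X ^+ n * ('X + 1) ^+ (d - n).
Proof.
move=> Hn; rewrite (bigID P) /= mulrC; congr (_ * _).
  rewrite (eq_bigr (fun _ => 'X)); last by move=> k /negbTE ->; rewrite addr0.
  by rewrite prodr_const Hn.
rewrite (eq_bigr (fun _ => 'X + 1)); last by move=> k ->.
rewrite prodr_const; congr (_ ^+ _).
move: (cardC P) (card_ord d) => H1 H2; rewrite -Hn; set x := #|P|; set y := #|[predC P]|; set z := #|'I_d|.
by rewrite -H2 -H1 addnK.
Qed.

Lemma det_Q (R : realType) d (a : 'I_d -> R) (A : 'M[R]_d) (P : pred 'I_d) n :
  associated_matrix a A -> #|[predC P]| = n ->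
  \det (Mp A (fun k => ((P k)%:R : R))) =
  Qpoly a ('X ^+ n * ('X + 1) ^+ (d - n)).
Proof.
move=> [_ Hdet] Hn; apply: poly_eq_ev => s.
rewrite detMp Qpoly_eval -(@prod_form R d P n Hn) Hdet.
have -> : (0 : R)%:M = 0 :> 'M_d by apply/matrixP => k l; rewrite !mxE mul0rn.
by rewrite add0r.
Qed.

Theorem lemma3p4 (R : realType) (d : nat) (a : 'I_d -> R) (A : 'M[R]_d) :
  UN a -> associated_matrix a A ->
  exists beta : R, forall i j : 'I_d, i != j -> A i j ^+ 2 = beta ^+ 2.
Proof.
move=> _ HA.
set c1 := (Qpoly a ('X ^+ 1 * ('X + 1) ^+ (d - 1)))`_1.
set c2 := (Qpoly a ('X ^+ 2 * ('X + 1) ^+ (d - 2)))`_2.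
have diagA : forall i, A i i = c1.
  move=> i; rewrite -(@coef1 R d A (fun k => ((k != i) : bool)%:R)) //.
  rewrite (@det_Q R d a A (fun k => k != i) 1) //.
  by rewrite -(card1 i); apply: eq_card => k; rewrite !inE negbK.
have offA : forall i j, i != j -> A i j ^+ 2 = c1 ^+ 2 - c2.
  move=> i j ij.
  have Aji : A j i = A i j by case: HA => /matrixP /(_ i j); rewrite mxE.
  have := @coef2 R d A (fun k => (((k != i) && (k != j)) : bool)%:R) i j ij (fun k => erefl).
  rewrite (@det_Q R d a A (fun k => (k != i) && (k != j)) 2) //; last first.
    transitivity #|pred2 i j|; last by rewrite card2 ij.
    apply: eq_card => k.
    by rewrite !inE negb_and !negbK.
  rewrite !diagA Aji -/c2 => ->.
  by rewrite opprB addrC subrK expr2.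
exists (Num.sqrt (c1 ^+ 2 - c2)) => i j ij.
by rewrite offA // sqr_sqrtr // -(offA i j ij) sqr_ge0.
Qed.
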